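(* Let $P(t)=\binom{r+t}{r}-\binom{r+t-d}{r}$. For every integer $D\ge 0$, every indivisible one-parameter subgroup $\lambda\in\Gamma(T)$ and every real $\delta>0$, $$E_{d+D,[\lambda],|M_D|\,\delta}=E_{d,[\lambda],\delta}$$ as subsets of $\mathrm{Hilb}^P(\mathbb{P}^r_k)$. Consequently, for all integers $t\ge d$ the Hesselink stratifications $\mathrm{Hilb}^P(\mathbb{P}^r_k)^{us}_t=\coprod_{[\lambda],\delta>0}E_{t,[\lambda],\delta}$ coincide (up to the rescaling $\delta\mapsto |M_{t-d}|\delta$ of the index $\delta$), and in particular $\mathrm{Hilb}^P(\mathbb{P}^r_k)^{us}_{d+D}=\mathrm{Hilb}^P(\mathbb{P}^r_k)^{us}_{d}$ as sets for every $D\ge 0$.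
   Context: Let $k$ be an algebraically closed field, $r\ge1$, $d\ge1$ integers, $S=k[x_0,\dots,x_r]$ graded by degree, $S_t$ its degree-$t$ part, and $M_t$ the set of monomials of degree $t$ (so $|M_t|=\binom{r+t}{r}$). Let $P(t)=\binom{r+t}{r}-\binom{r+t-d}{r}$; then $\mathrm{Hilb}^P(\mathbb{P}^r_k)$ parametrizes hypersurfaces of degree $d$: a closed point $x$ corresponds to $H_x=V(f)$ with $0\ne f\in S_d$ unique up to scalar. For $t\ge d$ put $Q(t)=\dim S_t-P(t)=|M_{t-d}|$ and let $\phi_t:\mathrm{Hilb}^P(\mathbb{P}^r_k)\to\mathbb{P}(\bigwedge^{Q(t)}S_t)$ send $x$ to the Plücker point $[\bigwedge^{Q(t)}(f\cdot S_{t-d})]$ of the degree-$t$ part of the ideal $(f)$ (the $t$-th Hilbert point). $G=\mathrm{GL}_{r+1}(k)$ acts on $S_1=\mathrm{span}(x_0,\dots,x_r)$ by the standard representation, hence on $S$, on the Hilbert scheme ($g.x$ corresponds to $g.f$) and on $\mathbb{P}(\bigwedge^{Q(t)}S_t)$, compatibly with $\phi_t$. Let $H=\mathrm{SL}_{r+1}(k)$, $T_0\subset G$ the diagonal torus, $T=T_0\cap H$. Identify $\Gamma(T_0)\cong\mathbb{Z}^{r+1}$: $\lambda=(a_0,\dots,a_r)$ means $\lambda(s)=\mathrm{diag}(s^{a_0},\dots,s^{a_r})$; then $\lambda(s)$ multiplies the monomial $x_0^{e_0}\cdots x_r^{e_r}$ by $s^{\sum a_ie_i}$, and $\Gamma(T)$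 consists of those $\lambda$ with $\sum a_i=0$. Fix a conjugation-invariant norm $\Vert\cdot\Vert$ on the set $\Gamma(G)$ of one-parameter subgroups which equals the Euclidean norm $\sqrt{\sum a_i^2}$ on $\Gamma(T_0)$. A one-parameter subgroup is indivisible if it is not $n\mu$ for an integer $n\ge2$ and a one-parameter subgroup $\mu$. For a $G$-representation $V$, $0\ne v\in V$ and $\lambda\in\Gamma(G)$, write $v=\sum_i v_i$ with $\lambda(s)v_i=s^iv_i$ and set $\mu(v,\lambda)=\min\{i: v_i\neq 0\}$ (well defined on projective points). For $t\ge d$ let $\Lambda_{x,t}$ be the (nonempty) set of indivisible $\lambda\in\Gamma(H)$ maximizing $\mu(\phi_t(x),\lambda)/\Vert\lambda\Vert$; $x$ is unstable at level $t$ if this maximum is $>0$, and $\mathrm{Hilb}^P(\mathbb{P}^r_k)^{us}_t$ is the set of such $x$. For an indivisible $\lambda\in\Gamma(T)$ and $\delta>0$, $E_{t,[\lambda],\delta}$ is the set of $x$ such that $\Lambda_{x,t}$ meets the $G$-conjugacy class $[\lambda]$ of $\lambda$ and the maximum value of $\mu(\phi_t(x),\cdot)/\Vert\cdot\Vert$ equals $\delta$ (Hesselink strata). *)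

(* Defs.v *)
From HB Require Import structures.
From Stdlib Require Import Reals ClassicalEpsilon.
From mathcomp Require Import all_boot all_order all_algebra.

Set Implicit Arguments.
Unset Strict Implicit.
Unset Printing Implicit Defensive.

Import GRing.Theory.
Local Open Scope ring_scope.

Definition mono (r t : nat) :=
  {e : {ffun 'I_r.+1 -> 'I_t.+1} | (\sum_(i < r.+1) (e i : nat))%N == t}.

Definition mono_eval (k : fieldType) (r t : nat) (e : mono r t) (v : 'rV[k]_r.+1) : k :=
  \prod_(i < r.+1) (v ord0 i) ^+ (val e i : nat).

Definition hform (k : fieldType) (r t : nat) := {ffun mono r t -> k}.

Definition feval (k : fieldType) (r t : nat) (F : hform k r t) (v : 'rV[k]_r.+1) : k :=
  \sum_(e : mono r t) F e * mono_eval e v.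

(* coefficients in the monomial basis M_t of a homogeneous polynomial function
   of degree t (unique since k is infinite) *)
Definition coeffs (k : fieldType) (r t : nat) (Fn : 'rV[k]_r.+1 -> k) : hform k r t :=
  epsilon (inhabits [ffun _ => 0]) (fun c : hform k r t => forall v, Fn v = feval c v).

(* One-parameter subgroups of G = GL_{r+1}(k): morphisms of algebraic groups
   G_m -> GL_{r+1}, given by their values at the points s <> 0 of G_m (the value
   at s = 0 is irrelevant): entries are Laurent polynomials in s, values are
   invertible, and lambda is a group homomorphism. *)
Definition is_ops (k : fieldType) (r : nat) (l : k -> 'M[k]_r.+1) : Prop :=
  (exists N : nat, exists P : 'M[{poly k}]_r.+1,
      forall s, s != 0 -> l s = s ^- N *: map_mx (fun p => p.[s]) P)
  /\ (forall s, s != 0 -> l s \in unitmx)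
  /\ (forall s t, s != 0 -> t != 0 -> l (s * t) = l s *m l t).

Definition is_ops_SL (k : fieldType) (r : nat) (l : k -> 'M[k]_r.+1) : Prop :=
  is_ops l /\ (forall s, s != 0 -> \det (l s) = 1).

Definition indivisible (k : fieldType) (r : nat) (l : k -> 'M[k]_r.+1) : Prop :=
  ~ (exists n : nat, (2 <= n)%N /\
       exists m : k -> 'M[k]_r.+1, is_ops m /\ forall s, s != 0 -> l s = (m s) ^+ n).

Definition conj_ops (k : fieldType) (r : nat) (l l' : k -> 'M[k]_r.+1) : Prop :=
  exists g : 'M[k]_r.+1, g \in unitmx /\
    forall s, s != 0 -> l' s = g *m l s *m invmx g.

Definition diag_ops (k : fieldType) (r : nat) (a : 'I_r.+1 -> int) : k -> 'M[k]_r.+1 :=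
  fun s => diag_mx (\row_i (s ^ a i)).

(* The action of g on S: g.x_j = sum_i g_ij x_i, i.e. (g.F)(v) = F(v *m g).
   Entry (m, e): coefficient of the monomial e in lambda(s).(f * m),
   for m in M_{t-d}, e in M_t. *)
Definition hilb_entry (k : fieldType) (r d t : nat) (f : hform k r d)
    (l : k -> 'M[k]_r.+1) (s : k) (m : mono r (t - d)) (e : mono r t) : k :=
  coeffs t (fun v => feval f (v *m l s) * mono_eval m (v *m l s)) e.

Definition Qdim (r d t : nat) : nat := #|{: mono r (t - d)}|.

(* Plucker coordinates (up to sign, with repetitions and zeros) of
   lambda(s) . /\^{Q(t)} (f S_{t-d}), Q(t) = |M_{t-d}|, in the monomial basis. *)
Definition plucker (k : fieldType) (r d t : nat) (f : hform k r d)
    (l : k -> 'M[k]_r.+1) (s : k) (b : 'I_(Qdim r d t) -> mono r t) : k :=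
  \det (\matrix_(i, j) hilb_entry f l s (enum_val i) (b j)).

Definition ord_ge (k : fieldType) (r d t : nat) (f : hform k r d)
    (l : k -> 'M[k]_r.+1) (i : int) : Prop :=
  forall b : 'I_(Qdim r d t) -> mono r t,
    exists p : {poly k}, forall s, s != 0 -> plucker f l s b = s ^ i * p.[s].

Definition mu_is (k : fieldType) (r d t : nat) (f : hform k r d)
    (l : k -> 'M[k]_r.+1) (i : int) : Prop :=
  ord_ge t f l i /\ ~ ord_ge t f l (i + 1).

Definition intR (z : int) : R :=
  match z with Posz n => INR n | Negz n => Ropp (INR n.+1) end.

Definition admissible_norm (k : fieldType) (r : nat)
    (nrm : (k -> 'M[k]_r.+1) -> R) : Prop :=
  (forall l l', is_ops l -> (forall s, s != 0 -> l s = l' s) -> nrm l = nrm l')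
  /\ (forall l g, is_ops l -> g \in unitmx ->
        nrm (fun s => g *m l s *m invmx g) = nrm l)
  /\ (forall a : 'I_r.+1 -> int,
        nrm (diag_ops a) = sqrt (\big[Rplus/R0]_(i < r.+1) Rsqr (intR (a i)))).

Definition ratio_is (k : fieldType) (r d : nat) (nrm : (k -> 'M[k]_r.+1) -> R)
    (t : nat) (f : hform k r d) (l : k -> 'M[k]_r.+1) (x : R) : Prop :=
  exists i : int, mu_is t f l i /\ x = Rdiv (intR i) (nrm l).

Definition max_value (k : fieldType) (r d : nat) (nrm : (k -> 'M[k]_r.+1) -> R)
    (t : nat) (f : hform k r d) (delta : R) : Prop :=
  (exists l, is_ops_SL l /\ indivisible l /\ ratio_is nrm t f l delta)
  /\ (forall l x, is_ops_SL l -> indivisible l -> ratio_is nrm t f l x -> Rle x delta).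

Definition stratum (k : fieldType) (r d : nat) (nrm : (k -> 'M[k]_r.+1) -> R)
    (t : nat) (l0 : k -> 'M[k]_r.+1) (delta : R) (f : hform k r d) : Prop :=
  (exists l, is_ops_SL l /\ indivisible l /\ conj_ops l0 l /\ ratio_is nrm t f l delta)
  /\ (forall l x, is_ops_SL l -> indivisible l -> ratio_is nrm t f l x -> Rle x delta).

Definition unstable (k : fieldType) (r d : nat) (nrm : (k -> 'M[k]_r.+1) -> R)
    (t : nat) (f : hform k r d) : Prop :=
  exists delta, Rlt R0 delta /\ max_value nrm t f delta.

(* Main.v *)
Require Import Defs.
From HB Require Import structures.
From Stdlib Require Import Reals ClassicalEpsilon Classical.
From mathcomp Require Import all_boot all_order all_algebra fingroup perm zify.

Set Implicit Arguments.
Unset Strict Implicit.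
Unset Printing Implicit Defensive.
Import GRing.Theory.
Local Open Scope ring_scope.


Section Gen.
Variable r : nat.

Lemma mono_sum t (e : mono r t) : (\sum_i (val e i : nat))%N = t.
Proof. exact: (eqP (valP e)). Qed.

Lemma mono_ext t (e e' : mono r t) : (forall i, (val e i : nat) = val e' i) -> e = e'.
Proof. by move=> H; apply: val_inj; apply/ffunP => i; apply: val_inj; apply: H. Qed.

Lemma le_sum_nat (nn : 'I_r.+1 -> nat) i : (nn i <= \sum_j nn j)%N.
Proof. by rewrite (bigD1 i) //= leq_addr. Qed.

Lemma mk_mono_proof t (nn : 'I_r.+1 -> nat) (H : (\sum_i nn i)%N = t) :
  (\sum_(i < r.+1) (([ffun i => inord (nn i)] : {ffun 'I_r.+1 -> 'I_t.+1}) i : nat))%N == t.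
Proof.
apply/eqP; rewrite -[RHS]H; apply: eq_bigr => i _; rewrite ffunE inordK //.
by rewrite ltnS -H le_sum_nat.
Qed.

Definition mk_mono t (nn : 'I_r.+1 -> nat) (H : (\sum_i nn i)%N = t) : mono r t :=
  exist (fun e : {ffun 'I_r.+1 -> 'I_t.+1} => (\sum_(i < r.+1) (e i : nat))%N == t)
    [ffun i => inord (nn i)] (mk_mono_proof H).

Lemma mk_monoE t nn (H : (\sum_i nn i)%N = t) i : (val (mk_mono H) i : nat) = nn i.
Proof. by rewrite /= ffunE inordK // ltnS -H le_sum_nat. Qed.

Variable R : comNzRingType.

Definition meval t (e : mono r t) (v : 'rV[R]_r.+1) : R :=
  \prod_(i < r.+1) (v ord0 i) ^+ (val e i : nat).

Definition fev t (c : {ffun mono r t -> R}) (v : 'rV[R]_r.+1) : R :=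
  \sum_(e : mono r t) c e * meval e v.

Definition rep t (phi : 'rV[R]_r.+1 -> R) :=
  exists c : {ffun mono r t -> R}, forall v, phi v = fev c v.

Lemma rep_ext t phi psi : rep t phi -> (forall v, phi v = psi v) -> rep t psi.
Proof. by move=> [c Hc] H; exists c => v; rewrite -H. Qed.

Lemma rep0 t : rep t (fun _ => 0).
Proof. by exists [ffun _ => 0] => v; rewrite /fev big1 // => e _; rewrite ffunE mul0r. Qed.

Lemma repD t phi psi : rep t phi -> rep t psi -> rep t (fun v => phi v + psi v).
Proof.
move=> [c Hc] [c' Hc']; exists [ffun e => c e + c' e] => v.
by rewrite Hc Hc' /fev -big_split; apply: eq_bigr => e _; rewrite ffunE mulrDl.
Qed.

Lemma repZ t a phi : rep t phi -> rep t (fun v => a * phi v).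
Proof.
move=> [c Hc]; exists [ffun e => a * c e] => v.
by rewrite Hc /fev mulr_sumr; apply: eq_bigr => e _; rewrite ffunE mulrA.
Qed.

Lemma rep_sum t (I : Type) (s : seq I) (P : pred I) (F : I -> 'rV[R]_r.+1 -> R) :
  (forall i, P i -> rep t (F i)) -> rep t (fun v => \sum_(i <- s | P i) F i v).
Proof.
move=> H; elim: s => [|x s IH].
  by refine (rep_ext (rep0 t) _) => v; rewrite big_nil.
case Px: (P x).
  by refine (rep_ext (repD (H x Px) IH) _) => v; rewrite big_cons Px.
by refine (rep_ext IH _) => v; rewrite big_cons Px.
Qed.

Lemma rep_mono t (nn : 'I_r.+1 -> nat) : (\sum_i nn i)%N = t ->
  rep t (fun v => \prod_i v ord0 i ^+ nn i).
Proof.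
move=> H; exists [ffun e => (e == mk_mono H)%:R] => v.
rewrite /fev (bigD1 (mk_mono H)) //= ffunE eqxx mul1r [X in _ + X]big1 ?addr0.
  by rewrite /meval; apply: eq_bigr => i _; rewrite mk_monoE.
by move=> e /negbTE ne; rewrite ffunE ne mul0r.
Qed.

Lemma meval_mul a b (e : mono r a) (e' : mono r b) v :
  meval e v * meval e' v = \prod_i v ord0 i ^+ (val e i + val e' i)%N.
Proof. by rewrite /meval -big_split; apply: eq_bigr => i _; rewrite exprD. Qed.

Lemma repM a b phi psi : rep a phi -> rep b psi -> rep (a + b) (fun v => phi v * psi v).
Proof.
move=> [c Hc] [c' Hc'].
apply: (@rep_ext _ (fun v => \sum_(e : mono r a) \sum_(e' : mono r b)
   (c e * c' e') * (\prod_i v ord0 i ^+ (val e i + val e' i)%N))).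
  apply: rep_sum => e _; apply: rep_sum => e' _; apply: repZ; apply: rep_mono.
  by rewrite big_split /= !mono_sum.
move=> v; rewrite Hc Hc' /fev mulr_suml; apply: eq_bigr => e _.
rewrite mulr_sumr; apply: eq_bigr => e' _.
by rewrite -meval_mul mulrACA.
Qed.

Lemma rep1 : rep 0 (fun _ => 1).
Proof.
apply: (@rep_ext _ (fun v => \prod_i v ord0 i ^+ 0)); first by apply: rep_mono; rewrite big1.
by move=> v; rewrite big1.
Qed.

Lemma repX t m phi : rep t phi -> rep (t * m) (fun v => phi v ^+ m).
Proof.
move=> H; elim: m => [|m IH].
  by rewrite muln0; refine (rep_ext rep1 _) => v; rewrite expr0.
rewrite mulnS; refine (rep_ext (repM H IH) _) => v; rewrite exprS.
by [].
Qed.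

Lemma rep_lin (a : 'I_r.+1 -> R) : rep 1 (fun v => \sum_j v ord0 j * a j).
Proof.
apply: rep_sum => j _; apply: (@rep_ext _ (fun v => a j * \prod_i v ord0 i ^+ (i == j))).
  apply: repZ; apply: rep_mono; rewrite (bigD1 j) //= eqxx big1 // => i /negbTE ->.
  by [].
move=> v; rewrite (bigD1 j) //= eqxx expr1 big1 ?mulr1 1?mulrC // => i /negbTE ->.
by rewrite expr0.
Qed.

Lemma rep_subst t (e : mono r t) (M : 'M[R]_r.+1) :
  rep t (fun v => meval e (v *m M)).
Proof.
have H : forall s : seq 'I_r.+1, rep (\sum_(i <- s) (val e i : nat))%N
    (fun v => \prod_(i <- s) (v *m M) ord0 i ^+ (val e i : nat)).
  elim=> [|x s IH].
    by rewrite big_nil; refine (rep_ext rep1 _) => v; rewrite big_nil.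
  rewrite big_cons.
  have Hx : rep (1 * val e x) (fun v => (v *m M) ord0 x ^+ (val e x : nat)).
    apply: repX; refine (rep_ext (rep_lin (fun j => M j x)) _) => v.
    by rewrite mxE.
  rewrite mul1n in Hx.
  by refine (rep_ext (repM Hx IH) _) => v; rewrite big_cons.
have := H (index_enum 'I_r.+1).
by rewrite mono_sum.
Qed.

Lemma rep_fsubst t (c : {ffun mono r t -> R}) (M : 'M[R]_r.+1) :
  rep t (fun v => fev c (v *m M)).
Proof. by apply: rep_sum => e _; apply: repZ; apply: rep_subst. Qed.

Lemma meval_scale t (e : mono r t) a v : meval e (a *: v) = a ^+ t * meval e v.
Proof.
rewrite /meval -[in a ^+ t](mono_sum e) -prodrXr -big_split /=.
by apply: eq_bigr => i _; rewrite mxE exprMn.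
Qed.

End Gen.


Section Field.
Variable k : closedFieldType.

Lemma fresh (l : seq k) : exists x, x != 0 /\ x \notin l.
Proof.
pose p := \prod_(a <- 0 :: l) ('X - a%:P).
have hs : size p = (size l).+2 by rewrite size_prod_XsubC.
have hq : size (p + 1) != 1%N.
  by rewrite size_polyDl ?hs // size_poly1.
have [x /rootP rx] := closed_rootP _ hq.
have : x \notin 0 :: l.
  apply/negP => xin; move: rx; rewrite hornerD hornerC.
  by move/rootP: (eqbRL (root_prod_XsubC _ _) xin) => ->; rewrite add0r; apply/eqP; rewrite oner_eq0.
by rewrite in_cons negb_or => /andP [a b]; exists x.
Qed.

Lemma nz_list m : exists l : seq k, [/\ uniq l, size l = m & 0 \notin l].
Proof.
elim: m => [|m [l [ul sl nl]]]; first by exists [::].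
have [x [x0 xl]] := fresh l.
exists (x :: l); split => //=; first by rewrite xl.
  by rewrite sl.
by rewrite in_cons negb_or eq_sym x0.
Qed.

Lemma polyvan (p : {poly k}) : (forall s, s != 0 -> p.[s] = 0) -> p = 0.
Proof.
move=> H; apply/eqP; apply: contraT => pn0.
have [l [ul sl nl]] := nz_list (size p).
have : (size l < size p)%N.
  apply: max_poly_roots => //.
  apply/allP => x xl; apply/rootP; apply: H.
  by apply: contraNneq nl => <-.
by rewrite sl ltnn.
Qed.

Lemma digits_inj B m (f g : 'I_m -> nat) : (forall i, f i < B)%N -> (forall i, g i < B)%N ->
  (\sum_i f i * B ^ i = \sum_i g i * B ^ i)%N -> f =1 g.
Proof.
elim: m f g => [|m IH] f g hf hg.
  by move=> _ [].
rewrite !big_ord_recl /= !expn0 !muln1.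
have E : forall h : 'I_m.+1 -> nat, (\sum_(i < m) h (lift ord0 i) * B ^ (bump 0 i) =
   (\sum_(i < m) h (lift ord0 i) * B ^ i) * B)%N.
  by move=> h; rewrite big_distrl /=; apply: eq_bigr => i _; rewrite /bump /= add1n expnS mulnCA mulnC.
rewrite !E => H.
have e0 : f ord0 = g ord0.
  have := congr1 (fun x => x %% B)%N H.
  by rewrite /= !(addnC (f ord0)) !(addnC (g ord0)) !modnMDl !modn_small.
move: H; rewrite e0 => /eqP; rewrite eqn_add2l eqn_mul2r => /orP [/eqP B0|/eqP H].
  by move: (hf ord0); rewrite B0.
have IH' := IH (fun i => f (lift ord0 i)) (fun i => g (lift ord0 i)) (fun i => hf _) (fun i => hg _) H.
move=> i; case: (unliftP ord0 i) => [j ->|->] //.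
Qed.

Variable r : nat.

Definition nb B t (e : mono r t) : nat := (\sum_i val e i * B ^ i)%N.

Lemma nb_inj B t : (t < B)%N -> injective (@nb B t).
Proof.
move=> tB e e' H; apply: mono_ext; apply: (digits_inj _ _ H) => i;
  by apply: leq_ltn_trans tB; rewrite -ltnS.
Qed.

Definition kr B (s : k) : 'rV[k]_r.+1 := \row_i s ^+ (B ^ i).

Lemma meval_kr B t (e : mono r t) s : meval e (kr B s) = s ^+ nb B e.
Proof.
rewrite /meval /nb -prodrXr; apply: eq_bigr => i _.
by rewrite mxE -exprM mulnC.
Qed.

Definition kpoly B t (c : {ffun mono r t -> k}) : {poly k} :=
  \sum_(e : mono r t) c e *: 'X^(nb B e).

Lemma kpoly_eval B t (c : {ffun mono r t -> k}) s : (kpoly B c).[s] = fev c (kr B s).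
Proof.
rewrite /kpoly horner_sum /fev; apply: eq_bigr => e _.
by rewrite hornerZ hornerXn meval_kr.
Qed.

Lemma kpoly_coef B t (c : {ffun mono r t -> k}) e : (t < B)%N -> (kpoly B c)`_(nb B e) = c e.
Proof.
move=> tB; rewrite /kpoly coef_sum (bigD1 e) //= coefZ coefXn eqxx mulr1 big1 ?addr0 //.
move=> e' ne; rewrite coefZ coefXn.
case: eqP => [/nb_inj H|]; last by rewrite mulr0.
by move: ne; rewrite H // eqxx.
Qed.

Lemma fev_inj t (c c' : {ffun mono r t -> k}) : (forall v, fev c v = fev c' v) -> c = c'.
Proof.
move=> H; have E : kpoly t.+1 c = kpoly t.+1 c'.
  apply/eqP; rewrite -subr_eq0; apply/eqP; apply: polyvan => s _.
  by rewrite hornerD hornerN !kpoly_eval H subrr.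
by apply/ffunP => e; rewrite -(kpoly_coef c e (ltnSn t)) E kpoly_coef.
Qed.

Lemma fev_domain a b (g : {ffun mono r a -> k}) (h : {ffun mono r b -> k}) :
  (forall v, fev g v * fev h v = 0) -> g != 0 -> h = 0.
Proof.
move=> H gn0; pose B := (a + b).+1.
have aB : (a < B)%N by rewrite ltnS leq_addr.
have bB : (b < B)%N by rewrite ltnS leq_addl.
have E : kpoly B g * kpoly B h = 0.
  apply: polyvan => s _; by rewrite hornerM !kpoly_eval H.
move/eqP: E; rewrite mulf_eq0 => /orP [/eqP E|/eqP E].
  move: gn0; suff -> : g = 0 by rewrite eqxx.
  by apply/ffunP => e; rewrite -(kpoly_coef g e aB) E coef0 ffunE.
by apply/ffunP => e; rewrite -(kpoly_coef h e bB) E coef0 ffunE.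
Qed.

Lemma fevalE t (c : hform k r t) v : feval c v = fev c v.
Proof. by []. Qed.

Lemma mono_evalE t (e : mono r t) (v : 'rV[k]_r.+1) : mono_eval e v = meval e v.
Proof. by []. Qed.

Lemma coeffsE t (phi : 'rV[k]_r.+1 -> k) : rep t phi -> forall v, phi v = fev (coeffs t phi) v.
Proof.
move=> [c Hc]; rewrite /coeffs.
have := @epsilon_spec _ (inhabits [ffun _ => 0]) (fun c : hform k r t => forall v, phi v = feval c v).
by apply; exists c.
Qed.

Lemma coeffs_eq t (phi : 'rV[k]_r.+1 -> k) (c : {ffun mono r t -> k}) : (forall v, phi v = fev c v) -> coeffs t phi = c.
Proof.
move=> H; apply: fev_inj => v; rewrite -H; symmetry; apply: coeffsE.
by exists c.
Qed.

End Field.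


Lemma det_rho (k : fieldType) n (M : 'M[k]_n) (rho : 'I_n -> nat) : injective rho ->
  (forall i j, (rho i < rho j)%N -> M i j = 0) -> \det M = \prod_i M i i.
Proof.
move=> rinj H; rewrite /determinant (bigD1 1%g) //= [X in _ + X]big1 ?addr0.
  by rewrite odd_perm1 expr0 mul1r; apply: eq_bigr => i _; rewrite perm1.
move=> s sn1.
case: (boolP [forall i, (rho (s i) <= rho i)%N]) => [/forallP Hle|].
  exfalso; move/eqP: sn1; apply; apply/permP => i; rewrite perm1.
  suff E : forall i, rho (s i) = rho i by apply: rinj; rewrite E.
  move=> i0; apply/eqP; rewrite eqn_leq Hle /=.
  rewrite leqNgt; apply/negP => lt.
  have : (\sum_i rho (s i) < \sum_i rho i)%N.
    rewrite (bigD1 i0) //= [X in (_ < X)%N](bigD1 i0) //=.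
    by rewrite -addSn leq_add // leq_sum // => i _; exact: Hle.
  by rewrite [X in (_ < X)%N](reindex_inj (@perm_inj _ s)) ltnn.
rewrite negb_forall => /existsP [i0]; rewrite -ltnNge => lt.
by rewrite (bigD1 i0) //= H // mul0r mulr0.
Qed.

Lemma top2 (k : fieldType) (p q : {poly k}) a b : (size p <= a.+1)%N -> (size q <= b.+1)%N ->
  (size (p * q)%R <= (a + b).+1)%N /\ (p * q)`_(a + b) = p`_a * q`_b.
Proof.
move=> hp hq; split.
  apply: leq_trans (size_polyMleq p q) _; lia.
have ha : (a < (a + b).+1)%N by lia.
rewrite coefM (bigD1 (Ordinal ha)) //= addKn big1 ?addr0 // => j.
rewrite -val_eqE /= => ne; case: (ltngtP j a) ne => // [lt|gt] _.
  rewrite [q`_ _]nth_default ?mulr0 //; apply: leq_trans hq _; lia.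
by rewrite nth_default ?mul0r //; apply: leq_trans hp gt.
Qed.

Lemma topX (k : fieldType) (p : {poly k}) a e : (size p <= a.+1)%N ->
  (size (p ^+ e) <= (a * e).+1)%N /\ (p ^+ e)`_(a * e) = p`_a ^+ e.
Proof.
move=> hp; elim: e => [|e [IH1 IH2]].
  by rewrite muln0 !expr0 size_poly1 coefC.
rewrite mulnS !exprS; have [h1 h2] := top2 hp IH1; split => //.
by rewrite h2 IH2.
Qed.

Lemma topP (k : fieldType) (I : Type) (s : seq I) (p : I -> {poly k}) (w : I -> nat) :
  (forall i, size (p i) <= (w i).+1)%N ->
  (size (\prod_(i <- s) p i)%R <= (\sum_(i <- s) w i).+1)%N /\
  (\prod_(i <- s) p i)`_(\sum_(i <- s) w i) = \prod_(i <- s) (p i)`_(w i).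
Proof.
move=> hp; elim: s => [|x s [IH1 IH2]].
  by rewrite !big_nil size_poly1 coefC.
rewrite !big_cons; have [h1 h2] := top2 (hp x) IH1; split => //.
by rewrite h2 IH2.
Qed.

Section Sym.
Variable k : closedFieldType.
Variables r u : nat.
Local Notation Q := #|{: mono r u}|.
Local Notation ev := (@enum_val (mono r u) {: mono r u}).

Lemma sum_mono (R : comNzRingType) (G : mono r u -> R) :
  \sum_(e : mono r u) G e = \sum_(j < Q) G (ev j).
Proof. exact: (reindex _ (onW_bij _ (enum_val_bij _))). Qed.

Lemma fev_mx (F : 'I_Q -> k) v :
  fev [ffun e => F (enum_rank e)] v = \sum_j F j * meval (ev j) v.
Proof. by rewrite /fev sum_mono; apply: eq_bigr => j _; rewrite ffunE enum_valK. Qed.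

Definition Sm (A : 'M[k]_r.+1) : 'M[k]_Q :=
  \matrix_(i, j) coeffs u (fun v => meval (ev i) (v *m A)) (ev j).

Lemma Sm_row A i v : meval (ev i) (v *m A) = \sum_j Sm A i j * meval (ev j) v.
Proof.
rewrite (coeffsE (rep_subst (ev i) A) v) /fev sum_mono.
by apply: eq_bigr => j _; rewrite mxE.
Qed.

Lemma Sm_char A (M : 'M[k]_Q) :
  (forall i v, meval (ev i) (v *m A) = \sum_j M i j * meval (ev j) v) -> Sm A = M.
Proof.
move=> H; apply/matrixP => i j; rewrite mxE.
rewrite (@coeffs_eq _ _ _ _ [ffun e => M i (enum_rank e)]) ?ffunE ?enum_valK //.
by move=> v; rewrite H fev_mx.
Qed.

Lemma SmM A B : Sm (A *m B) = Sm B *m Sm A.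
Proof.
apply: Sm_char => i v; rewrite mulmxA Sm_row.
under eq_bigr do rewrite Sm_row mulr_sumr.
rewrite exchange_big /=; apply: eq_bigr => l _.
by rewrite mxE mulr_suml; apply: eq_bigr => j _; rewrite mulrA.
Qed.

Lemma Sm1 : Sm 1%:M = 1%:M.
Proof.
apply: Sm_char => i v; rewrite mulmx1 (bigD1 i) //= mxE eqxx mul1r big1 ?addr0 //.
by move=> j /negbTE ne; rewrite mxE eq_sym ne mul0r.
Qed.

Lemma Sm_scale (a : k) (A : 'M[k]_r.+1) : Sm (a *: A) = a ^+ u *: Sm A.
Proof.
apply: Sm_char => i v; rewrite -scalemxAr meval_scale Sm_row mulr_sumr.
by apply: eq_bigr => j _; rewrite !mxE mulrA.
Qed.

Lemma sum_perm (s : {perm 'I_r.+1}) (m : mono r u) : (\sum_i (val m (s i) : nat))%N = u.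
Proof. by rewrite -[RHS](mono_sum m) [in RHS](reindex_inj (@perm_inj _ s)). Qed.

Definition mperm (s : {perm 'I_r.+1}) (m : mono r u) : mono r u :=
  @mk_mono r u (fun i => val m (s i)) (sum_perm s m).

Lemma mpermE s m i : (val (mperm s m) i : nat) = val m (s i).
Proof. by rewrite mk_monoE. Qed.

Lemma mperm_inj s : injective (mperm s).
Proof.
move=> m m' H; apply: mono_ext => i.
have := congr1 (fun x : mono r u => (val x ((s^-1)%g i) : nat)) H.
by rewrite /= !mpermE permKV.
Qed.

Lemma meval_perm (s : {perm 'I_r.+1}) (m : mono r u) (v : 'rV[k]_r.+1) :
  meval m (v *m perm_mx s) = meval (mperm s m) v.
Proof.
rewrite -[s]invgK -col_permE /meval (reindex_inj (@perm_inj _ s)) /=.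
by apply: eq_bigr => i _; rewrite mxE invgK permK mpermE.
Qed.

Definition tau (s : {perm 'I_r.+1}) : {perm 'I_Q} :=
  perm (inj_comp (@enum_rank_inj _) (inj_comp (@mperm_inj s) (@enum_val_inj _ _))).

Lemma Sm_perm s : Sm (perm_mx s) = perm_mx (tau s).
Proof.
apply: Sm_char => i v; rewrite meval_perm (bigD1 (tau s i)) //= big1 ?addr0.
  by rewrite /perm_mx mxE mxE eqxx mul1r permE /= enum_rankK.
by move=> j /negbTE ne; rewrite /perm_mx mxE mxE eq_sym ne mul0r.
Qed.

Lemma det_Sm_perm s : (\det (Sm (perm_mx s))) ^+ 2 = 1.
Proof. by rewrite Sm_perm det_perm sqrr_sign. Qed.

Lemma sum_mono_nat (G : mono r u -> nat) :
  (\sum_(e : mono r u) G e = \sum_(j < Q) G (ev j))%N.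
Proof. exact: (reindex _ (onW_bij _ (enum_val_bij _))). Qed.

Definition cnt := (\sum_(e : mono r u) val e ord0)%N.

Lemma cnt_sym l : (\sum_(e : mono r u) val e l)%N = cnt.
Proof.
rewrite /cnt (reindex_inj (@mperm_inj (tperm ord0 l))) /=.
by apply: eq_bigr => e _; rewrite mpermE tpermR.
Qed.

Local Notation B := u.+2.

Definition pl (U : 'M[k]_r.+1) (l : 'I_r.+1) : {poly k} := \sum_m U m l *: 'X^(B ^ m).

Definition upper (U : 'M[k]_r.+1) := forall i j : 'I_r.+1, (j < i)%N -> U i j = 0.

Lemma pl_eval U l s : (pl U l).[s] = (kr r B s *m U) ord0 l.
Proof.
rewrite /pl horner_sum mxE; apply: eq_bigr => m _.
by rewrite hornerZ hornerXn mxE mulrC.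
Qed.

Lemma B_gt1 : (1 < B)%N. Proof. by []. Qed.

Lemma pl_size U l : upper U -> (size (pl U l) <= (B ^ l).+1)%N.
Proof.
move=> hU; apply: leq_trans (size_sum _ _ _) _.
apply/bigmax_leqP => m _.
case: (leqP m l) => hm.
  apply: leq_trans (size_scale_leq _ _) _; rewrite size_polyXn ltnS.
  by rewrite leq_pexp2l.
by rewrite hU // scale0r size_poly0.
Qed.

Lemma pl_coef U l : upper U -> (pl U l)`_(B ^ l) = U l l.
Proof.
move=> hU; rewrite /pl coef_sum (bigD1 l) //= coefZ coefXn eqxx mulr1 big1 ?addr0 //.
move=> m ne; have ne' : (m == l :> nat) = false by apply/negbTE.
by rewrite coefZ coefXn eqn_exp2l // eq_sym ne' mulr0.
Qed.

Lemma kpoly_Sm U i : kpoly B [ffun e => Sm U i (enum_rank e)] =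
   \prod_l (pl U l) ^+ (val (ev i) l).
Proof.
apply/eqP; rewrite -subr_eq0; apply/eqP; apply: polyvan => s _.
rewrite hornerD hornerN kpoly_eval fev_mx -Sm_row horner_prod /meval.
rewrite [X in _ - X](eq_bigr (fun l => ((kr r B s *m U) ord0 l) ^+ val (ev i) l)) ?subrr //.
by move=> l _; rewrite horner_exp pl_eval.
Qed.

Lemma Sm_upper_coef U i j : upper U ->
  Sm U i j = (\prod_l (pl U l) ^+ (val (ev i) l))`_(nb B (ev j)).
Proof.
move=> hU; rewrite -kpoly_Sm kpoly_coef ?ffunE ?enum_valK //.
Qed.

Lemma Sm_upper U : upper U ->
  (forall i j, (nb B (ev i) < nb B (ev j))%N -> Sm U i j = 0) /\
  (forall i, Sm U i i = \prod_l U l l ^+ val (ev i) l).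
Proof.
move=> hU.
have T i := @topP k _ (index_enum 'I_r.+1) (fun l => pl U l ^+ val (ev i) l)
   (fun l => (B ^ l) * val (ev i) l)%N (fun l => (proj1 (topX (val (ev i) l) (pl_size l hU)))).
have E i : (\sum_(l <- index_enum 'I_r.+1) (B ^ l) * val (ev i) l)%N = nb B (ev i).
  by rewrite /nb; apply: eq_bigr => l _; rewrite mulnC.
split.
  move=> i j lt; rewrite Sm_upper_coef // nth_default //.
  have [h1 _] := T i; rewrite E in h1; exact: leq_trans h1 lt.
move=> i; rewrite Sm_upper_coef //; have [_ h2] := T i; rewrite E in h2.
rewrite h2; apply: eq_bigr => l _.
by have [_ ->] := topX (val (ev i) l) (pl_size l hU); rewrite pl_coef.
Qed.

Lemma det_Sm_upper U : upper U -> \det (Sm U) = (\prod_l U l l) ^+ cnt.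
Proof.
move=> hU; have [h1 h2] := Sm_upper hU.
rewrite (@det_rho _ _ _ (fun i => nb B (ev i))).
- under eq_bigr do rewrite h2.
  rewrite exchange_big /= -prodrXl; apply: eq_bigr => l _.
  by rewrite prodrXr -(cnt_sym l) sum_mono_nat.
- by move=> i j /nb_inj H; apply: enum_val_inj; apply: H.
- exact: h1.
Qed.

Definition lower1 (L : 'M[k]_r.+1) := forall i j : 'I_r.+1, (i <= j)%N -> L i j = (i == j)%:R.

Lemma det_Sm_lower L : lower1 L -> \det (Sm L) = 1.
Proof.
move=> hL; pose s : {perm 'I_r.+1} := perm (@rev_ord_inj r.+1).
pose M := perm_mx s *m L *m perm_mx (s^-1)%g.
have EM : M = col_perm s (row_perm s L) by rewrite col_permE row_permE.
have hM : upper M.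
  move=> i j lt; rewrite EM !mxE !permE hL.
    by rewrite (inj_eq rev_ord_inj) -val_eqE /= gtn_eqF.
  by rewrite /= leq_sub2l // ltnW.
have dM : \det (Sm M) = 1.
  rewrite det_Sm_upper // big1 ?expr1n // => l _.
  by rewrite EM !mxE !permE hL // eqxx.
have dP : \det (Sm (perm_mx (s^-1)%g)) * \det (Sm (perm_mx s)) = 1.
  by rewrite -det_mulmx -SmM -perm_mxM mulgV perm_mx1 Sm1 det1.
by move: dM; rewrite /M !SmM !det_mulmx mulrCA dP mulr1.
Qed.

Lemma det_Sm_SL (A : 'M[k]_r.+1) : \det A = 1 -> (\det (Sm A)) ^+ 2 = 1.
Proof.
move=> dA.
have hc := cormen_lup_correct A; have hp := cormen_lup_perm A.
have hL := @cormen_lup_lower _ _ A; have hU := @cormen_lup_upper _ _ A.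
have hdL := cormen_lup_detL A.
case: (cormen_lup A) hc hp hL hU hdL => [[P L] U] /= hc hp hL hU hdL.
have [s Ps] := is_perm_mxP _ hp.
have uU : upper U by move=> i j; apply: hU.
have lL : lower1 L by move=> i j; apply: hL.
have E : \det (Sm A) * \det (Sm P) = \det (Sm U) * \det (Sm L).
  by rewrite -!det_mulmx -!SmM !mulmxE hc.
have dU : \det U ^+ 2 = 1.
  have := congr1 determinant hc; rewrite -!mulmxE !det_mulmx hdL mul1r dA mulr1 Ps det_perm.
  by move=> <-; rewrite sqrr_sign.
have dU' : \det U = \prod_l U l l.
  rewrite -det_tr det_trig //; first by apply: eq_bigr => l _; rewrite mxE.
  by apply/is_trig_mxP => i j lt; rewrite mxE uU.
have := congr1 (fun x => x ^+ 2) E; rewrite /= !exprMn Ps det_Sm_perm mulr1.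
by rewrite (det_Sm_lower lL) expr1n mulr1 (det_Sm_upper uU) -exprM mulnC exprM -dU' dU expr1n.
Qed.

End Sym.

Import Order.TTheory Num.Theory.


Lemma meval_rmorph r (R S : comNzRingType) (phi : {rmorphism R -> S}) t (e : mono r t) V :
  phi (meval e V) = meval e (map_mx phi V).
Proof. by rewrite /meval rmorph_prod; apply: eq_bigr => i _; rewrite rmorphXn mxE. Qed.

Lemma fev_rmorph r (R S : comNzRingType) (phi : {rmorphism R -> S}) t (c : {ffun mono r t -> R}) V :
  phi (fev c V) = fev [ffun e => phi (c e)] (map_mx phi V).
Proof.
rewrite /fev rmorph_sum; apply: eq_bigr => e _.
by rewrite rmorphM meval_rmorph ffunE.
Qed.

Lemma map_mx_hornerC (k : fieldType) n m (v : 'M[k]_(n, m)) s :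
  map_mx (horner_eval s) (map_mx polyC v) = v.
Proof. by apply/matrixP => i j; rewrite !mxE /horner_eval hornerC. Qed.

Lemma det_one n (k : comNzRingType) (H : n = 1%N) (M : 'M[k]_n) i : \det M = M i i.
Proof. subst n; by rewrite [M]mx11_scalar det_scalar1 !mxE !ord1. Qed.

Lemma fev_scale r (R : comNzRingType) t (c : {ffun mono r t -> R}) a v :
  fev c (a *: v) = a ^+ t * fev c v.
Proof.
rewrite /fev mulr_sumr; apply: eq_bigr => e _.
by rewrite meval_scale mulrCA.
Qed.

Lemma fev_lin r (R : comNzRingType) t (I : finType) (a : I -> R) (c : I -> {ffun mono r t -> R}) v :
  fev [ffun e => \sum_i a i * c i e] v = \sum_i a i * fev (c i) v.
Proof.
rewrite /fev; under eq_bigr do rewrite ffunE mulr_suml.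
rewrite exchange_big /=; apply: eq_bigr => i _; rewrite mulr_sumr.
by apply: eq_bigr => e _; rewrite mulrA.
Qed.

Lemma int_max (Pr : int -> Prop) j m : Pr j -> ~ Pr (j + m%:Z) -> exists i, Pr i /\ ~ Pr (i + 1).
Proof.
elim: m j => [|m IH] j hj hm; first by rewrite addr0 in hm.
case: (classic (Pr (j + 1))) => h; last by exists j.
by apply: (IH (j + 1)) => //; rewrite -addrA -intS.
Qed.

Section Main.
Variable k : closedFieldType.
Variables r d t : nat.
Hypothesis hdt : (d <= t)%N.
Local Notation u := (t - d)%N.
Local Notation Q := (Qdim r d t).
Local Notation ev := (@enum_val (mono r u) {: mono r u}).

Lemma madd_proof (e : mono r d) (m : mono r u) : (\sum_i (val e i + val m i))%N = t.
Proof. by rewrite big_split /= !mono_sum subnKC. Qed.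

Definition madd e m := mk_mono (madd_proof e m).

Lemma meval_madd (R : comNzRingType) e m (v : 'rV[R]_r.+1) : meval (madd e m) v = meval e v * meval m v.
Proof. by rewrite meval_mul /meval; apply: eq_bigr => i _; rewrite mk_monoE. Qed.

Definition gm (g : {ffun mono r d -> k}) (m : mono r u) : {ffun mono r t -> k} :=
  [ffun e' => \sum_(e | madd e m == e') g e].

Lemma fev_gm g m v : fev (gm g m) v = fev g v * meval m v.
Proof.
rewrite /fev mulr_suml.
transitivity (\sum_e' \sum_(e | madd e m == e') g e * meval e' v).
  by apply: eq_bigr => e' _; rewrite ffunE mulr_suml.
rewrite (exchange_big_dep xpredT) //=; apply: eq_bigr => e _.
by rewrite (big_pred1 (madd e m)) ?meval_madd ?mulrA // => e'; rewrite /= eq_sym.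
Qed.

Lemma card_mono0 : #|{: mono r 0}| = 1%N.
Proof.
have H : (\sum_(i < r.+1) (0:nat))%N = 0%N by rewrite big1.
apply: (@eq_card1 _ (mk_mono H)) => x; rewrite !inE; symmetry; apply/eqP.
apply: mono_ext => i; rewrite mk_monoE.
by move: (ltn_ord (val x i)); rewrite ltnS leqn0 => /eqP.
Qed.

Variable l : k -> 'M[k]_r.+1.
Variable N : nat.
Variable P : 'M[{poly k}]_r.+1.
Hypothesis hl : forall s, s != 0 -> l s = s ^- N *: map_mx (fun p => p.[s]) P.
Hypothesis hdet : forall s, s != 0 -> \det (l s) = 1.
Variable f : hform k r d.
Hypothesis fn0 : f != 0.

Lemma hl' s : s != 0 -> l s = s ^- N *: map_mx (horner_eval s) P.
Proof. by move=> s0; rewrite hl. Qed.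

Definition G s : {ffun mono r d -> k} := coeffs d (fun v => feval f (v *m l s)).

Lemma G_fev s v : feval f (v *m l s) = fev (G s) v.
Proof. exact: (coeffsE (rep_fsubst f (l s)) v). Qed.

Lemma Gpoly : exists C : {ffun mono r d -> {poly k}},
  forall s, s != 0 -> forall e, G s e = (s ^- N) ^+ d * (C e).[s].
Proof.
have [C HC] := rep_fsubst [ffun e => (f e)%:P] P.
exists C => s s0 e.
suff -> : G s = [ffun e => (s ^- N) ^+ d * (C e).[s]] by rewrite ffunE.
apply: coeffs_eq => v.
rewrite fevalE (hl' s0) -scalemxAr fev_scale.
have E : fev f (v *m map_mx (horner_eval s) P) = fev [ffun e => (C e).[s]] v.
  have := congr1 (horner_eval s) (HC (map_mx polyC v)).
  rewrite !fev_rmorph map_mxM map_mx_hornerC.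
  have -> : [ffun e => horner_eval s ([ffun e0 => (f e0)%:P] e)] = f.
    by apply/ffunP => e'; rewrite !ffunE /horner_eval hornerC.
  by move=> ->; congr fev; apply/ffunP => e'; rewrite !ffunE.
rewrite E /fev mulr_sumr; apply: eq_bigr => e' _.
by rewrite !ffunE mulrA.
Qed.

Lemma Smpoly : exists Cm : 'M[{poly k}]_Q,
  forall s, Sm u (map_mx (horner_eval s) P) = map_mx (horner_eval s) Cm.
Proof.
have H : forall i : 'I_Q, exists C : {ffun mono r u -> {poly k}},
    forall V, meval (ev i) (V *m P) = fev C V.
  by move=> i; exact: rep_subst.
have [C HC] := fin_all_exists H.
exists (\matrix_(i, j) C i (ev j)) => s.
apply: Sm_char => i v.
have := congr1 (horner_eval s) (HC i (map_mx polyC v)).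
rewrite meval_rmorph fev_rmorph map_mxM map_mx_hornerC => ->.
by rewrite /fev sum_mono; apply: eq_bigr => j _; rewrite !mxE ffunE.
Qed.

Lemma chi_const : exists c : k, c != 0 /\ forall s, s != 0 -> \det (Sm u (l s)) = c.
Proof.
have [Cm HCm] := Smpoly.
pose M := (N * (u * Q))%N. pose pi := \det Cm.
have Echi : forall s, s != 0 -> \det (Sm u (l s)) = (s ^+ M)^-1 * pi.[s].
  move=> s s0; rewrite (hl' s0) Sm_scale detZ HCm det_map_mx /horner_eval.
  by rewrite -exprM exprVn -exprM.
have E2 : pi ^+ 2 = ('X^M) ^+ 2.
  apply/eqP; rewrite -subr_eq0; apply/eqP; apply: polyvan => s s0.
  have := det_Sm_SL u (hdet s0); rewrite (Echi s s0).
  rewrite hornerD hornerN !horner_exp hornerX exprMn => H.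
  have sM : s ^+ M != 0 by rewrite expf_neq0.
  have : pi.[s] ^+ 2 = (s ^+ M) ^+ 2.
    by rewrite -[RHS]mulr1 -H mulrA -exprMn mulrV ?expr1n ?mul1r // unitfE.
  by move=> ->; rewrite subrr.
move/eqP: E2; rewrite -subr_eq0 subr_sqr mulf_eq0 => /orP [E|E].
  exists 1; split; first exact: oner_neq0.
  move=> s s0; rewrite Echi //; move: E; rewrite subr_eq0 => /eqP ->.
  by rewrite hornerXn mulVf // expf_neq0.
exists (-1); split; first by rewrite oppr_eq0 oner_neq0.
move=> s s0; rewrite Echi //; move: E; rewrite addr_eq0 => /eqP ->.
by rewrite hornerN hornerXn mulrN mulVf // expf_neq0.
Qed.

Lemma pluckerE s b : s != 0 ->
  plucker f l s b = \det (Sm u (l s)) * \det (\matrix_(i, j) gm (G s) (ev i) (b j)).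
Proof.
move=> s0; rewrite /plucker -det_mulmx; congr (\det _); apply/matrixP => i j.
rewrite !mxE /hilb_entry.
rewrite (@coeffs_eq _ _ _ _ [ffun e => \sum_i' Sm u (l s) i i' * gm (G s) (ev i') e]).
  by rewrite ffunE; apply: eq_bigr => i' _; rewrite !mxE.
move=> v; rewrite mono_evalE G_fev Sm_row fev_lin mulr_sumr.
by apply: eq_bigr => i' _; rewrite fev_gm mulrCA.
Qed.

Lemma Qdd : Qdim r d d = 1%N.
Proof. by rewrite /Qdim subnn card_mono0. Qed.

Lemma plucker_d s (b : 'I_(Qdim r d d) -> mono r d) i0 : s != 0 ->
  plucker f l s b = G s (b i0).
Proof.
move=> s0; rewrite /plucker (det_one Qdd _ i0) mxE /hilb_entry.
rewrite (@coeffs_eq _ _ _ _ (G s)) // => v.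
rewrite mono_evalE G_fev; move: (enum_val i0) => m0.
rewrite [meval m0 _]big1 ?mulr1 // => i _.
have : (val m0 i <= 0)%N by rewrite -[X in (_ <= X)%N](subnn d) -ltnS ltn_ord.
by rewrite leqn0 => /eqP ->; rewrite expr0.
Qed.

Definition OG (i : int) := forall e, exists p : {poly k},
  forall s, s != 0 -> G s e = s ^ i * p.[s].

Lemma i0d : 'I_(Qdim r d d).
Proof. by rewrite Qdd; exact: ord0. Qed.

Lemma ordd_iff i : ord_ge d f l i <-> OG i.
Proof.
split.
  move=> H e; have [p Hp] := H (fun _ => e).
  by exists p => s s0; rewrite -(plucker_d _ i0d s0) Hp.
move=> H b; have [p Hp] := H (b i0d).
by exists p => s s0; rewrite (plucker_d _ i0d s0) Hp.
Qed.

Lemma int_split (i j : int) : j <= i -> exists n : nat, i = j + n%:Z.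
Proof. by move=> h; exists `|i - j|%N; rewrite gez0_abs ?subr_ge0 //; lia. Qed.

Lemma ord_ge_down t' i j : ord_ge t' f l i -> j <= i -> ord_ge t' f l j.
Proof.
move=> H /int_split [n En] b; have [p Hp] := H b.
exists ('X^n * p) => s s0; rewrite Hp // En exprzDr ?unitfE // hornerM hornerXn.
by rewrite mulrA.
Qed.

Lemma OG_down i j : OG i -> j <= i -> OG j.
Proof. by move=> H hj; apply/ordd_iff; apply: ord_ge_down hj; apply/ordd_iff. Qed.

Lemma OG_ex : exists i, OG i /\ ~ OG (i + 1).
Proof.
have [C HC] := Gpoly.
have base : OG (- (N * d)%N%:Z).
  move=> e; exists (C e) => s s0; rewrite HC // exprVn -exprM -exprnN.
  by [].
have [w Hw] : exists w, feval f w != 0.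
  apply: NNPP => H; move: fn0; suff -> : f = 0 by rewrite eqxx.
  apply: fev_inj => v.
  have -> : fev (0 : hform k r d) v = 0 by rewrite /fev big1 // => e _; rewrite ffunE mul0r.
  apply/eqP; apply: contraT => hv; by case: H; exists v.
have u1 : l 1 \in unitmx by rewrite unitmxE hdet ?oner_neq0 // unitr1.
have [e0 He0] : exists e0, G 1 e0 != 0.
  apply: NNPP => H; move: Hw.
  rewrite -[w](mulmxKV u1) G_fev /fev big1 ?eqxx //.
  move=> e _; have -> : G 1 e = 0 by apply/eqP; apply: contraT => he; by case: H; exists e.
  by rewrite mul0r.
have Cn0 : C e0 != 0.
  by apply: contraNneq He0 => E; rewrite HC ?oner_neq0 // E horner0 mulr0.
apply: (int_max base (m := size (C e0))) => Hm.
have [p Hp] := Hm e0.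
have E : C e0 = p * 'X^(size (C e0)).
  apply/eqP; rewrite -subr_eq0; apply/eqP; apply: polyvan => s s0.
  have := Hp s s0; rewrite HC // exprzDr ?unitfE // exprVn -exprM -exprnN.
  have hz : s ^- (N * d) != 0 by rewrite invr_eq0 expf_neq0.
  rewrite -mulrA => /(mulfI hz) h; rewrite hornerD hornerN hornerM hornerXn h.
  by rewrite [X in X - _]mulrC; exact: subrr.
have pn0 : p != 0 by apply: contraNneq Cn0 => p0; rewrite E p0 mul0r.
by have := congr1 (fun q : {poly k} => size q) E; rewrite /=; rewrite size_mulXn // => /eqP; rewrite -{1}[size (C e0)]addn0 eqn_add2l eq_sym size_poly_eq0 (negbTE pn0).
Qed.

Definition Kp (Pf : mono r d -> {poly k}) (b : 'I_Q -> mono r t) : 'M[{poly k}]_Q :=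
  \matrix_(i0, j) \sum_(e | madd e (ev i0) == b j) Pf e.

Lemma plucker_Kp c i (Pf : mono r d -> {poly k}) b :
  (forall s, s != 0 -> \det (Sm u (l s)) = c) ->
  (forall e s, s != 0 -> G s e = s ^ i * (Pf e).[s]) ->
  forall s, s != 0 -> plucker f l s b = s ^ (i * Q%:Z) * (c *: \det (Kp Pf b)).[s].
Proof.
move=> Hc HP s s0; rewrite pluckerE // Hc //.
have -> : \matrix_(i0, j) gm (G s) (ev i0) (b j) = s ^ i *: map_mx (horner_eval s) (Kp Pf b).
  apply/matrixP => i0 j; rewrite !mxE ffunE /horner_eval horner_sum mulr_sumr.
  by apply: eq_bigr => e _; rewrite HP.
rewrite detZ det_map_mx /horner_eval hornerZ -exprz_exp.
by rewrite mulrCA.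
Qed.

Lemma ordt_of_OG i : OG i -> ord_ge t f l (i * Q%:Z).
Proof.
move=> H b; have [Pf HP] := fin_all_exists H.
have [c [_ Hc]] := chi_const.
by exists (c *: \det (Kp Pf b)) => s s0; apply: plucker_Kp.
Qed.

Lemma not_ordt i : OG i -> ~ OG (i + 1) -> ~ ord_ge t f l (i * Q%:Z + 1).
Proof.
move=> H Hn Ht.
have [Pf HP] := fin_all_exists H.
have [c [c0 Hc]] := chi_const.
have [e0 He0] : exists e0, (Pf e0).[0] != 0.
  apply: NNPP => Hall; apply: Hn => e.
  have Z : root (Pf e) 0.
    by apply/rootP/eqP; apply: contraT => hz; case: Hall; exists e.
  have [q Hq] := factor_theorem _ _ Z.
  exists q => s s0; rewrite HP // Hq hornerM hornerXsubC subr0 exprzDr ?unitfE // expr1z.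
  by rewrite [q.[s] * s]mulrC mulrA.
pose g0 : {ffun mono r d -> k} := [ffun e => (Pf e).[0]].
have g0n0 : g0 != 0.
  apply: contraNneq He0 => E.
  by have := congr1 (fun g : {ffun mono r d -> k} => g e0) E; rewrite /= !ffunE => ->.
pose K0 : 'M[k]_(Q, #|{: mono r t}|) := \matrix_(i0, j) gm g0 (ev i0) (enum_val j).
have rf : row_free K0.
  apply: inj_row_free => w Hw.
  pose h : {ffun mono r u -> k} := [ffun m => w ord0 (enum_rank m)].
  have hz : h = 0.
    apply: (fev_domain _ g0n0) => v.
    have -> : fev g0 v * fev h v = fev [ffun e' => \sum_(j < Q) w ord0 j * gm g0 (ev j) e'] v.
      rewrite /h fev_mx mulr_sumr fev_lin; apply: eq_bigr => j _.
      by rewrite fev_gm mulrCA.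
    have -> : [ffun e' => \sum_(j < Q) w ord0 j * gm g0 (ev j) e'] = 0.
      apply/ffunP => e'; rewrite !ffunE.
      have := congr1 (fun M : 'M[k]_(1, #|{: mono r t}|) => M ord0 (enum_rank e')) Hw; rewrite /= /K0 !mxE.
      by move=> H0; rewrite -[RHS]H0; apply: eq_bigr => j _; rewrite mxE enum_rankK.
    by rewrite /fev big1 // => e _; rewrite ffunE mul0r.
  apply/rowP => j; rewrite mxE; have := congr1 (fun g : {ffun mono r u -> k} => g (ev j)) hz.
  by rewrite /= !ffunE enum_valK.
have rfull : row_full K0^T by rewrite /row_full mxrank_tr.
pose fr := fullrankfun rfull.
pose b j := (enum_val (fr j) : mono r t).
have [p Hp] := Ht b.
have E : c *: \det (Kp Pf b) = 'X * p.
  apply/eqP; rewrite -subr_eq0; apply/eqP; apply: polyvan => s s0.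
  have := Hp s s0; rewrite (plucker_Kp b Hc HP s0) exprzDr ?unitfE // expr1z -mulrA.
  have hz : s ^ (i * Q%:Z) != 0 by rewrite expfz_eq0 negb_and s0 orbT.
  move/(mulfI hz) => h2; rewrite hornerD hornerN hornerM hornerX h2.
  by rewrite subrr.
have E0 := congr1 (horner^~ 0) E.
rewrite /= hornerZ hornerM hornerX mul0r in E0.
move/eqP: E0; rewrite mulf_eq0 (negbTE c0) /=; apply/negP.
have -> : (\det (Kp Pf b)).[0] = \det (map_mx (horner_eval 0) (Kp Pf b)) by rewrite det_map_mx.
have -> : map_mx (horner_eval 0) (Kp Pf b) = (rowsub fr K0^T)^T.
  apply/matrixP => i0 j; rewrite !mxE /horner_eval horner_sum.
  by rewrite ffunE; apply: eq_bigr => e _; rewrite ffunE.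
by rewrite det_tr -unitfE -unitmxE; exact: fullrowsub_unit.
Qed.

Lemma mu_uniq t' j j' : mu_is t' f l j -> mu_is t' f l j' -> j = j'.
Proof.
move=> [h1 h2] [h1' h2']; case: (ltgtP j j') => // lt.
  by case: h2; apply: (ord_ge_down h1'); lia.
by case: h2'; apply: (ord_ge_down h1); lia.
Qed.

Lemma mu_main : (exists i, mu_is d f l i) /\
  (forall j, mu_is t f l j <-> exists i, mu_is d f l i /\ j = i * Q%:Z).
Proof.
have [i [Hi Hi1]] := OG_ex.
have mud : mu_is d f l i by split; [apply/ordd_iff | move/ordd_iff].
have mut : mu_is t f l (i * Q%:Z) by split; [apply: ordt_of_OG | apply: not_ordt].
split; first by exists i.
move=> j; split.
  by move=> hj; exists i; split => //; exact: mu_uniq hj mut.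
by move=> [i' [hi' ->]]; rewrite (mu_uniq hi' mud).
Qed.

End Main.


Lemma intR_oppn (q : nat) : intR (- (q%:Z)) = Ropp (INR q).
Proof. by case: q => [|q] /=; [rewrite Ropp_0 | ]. Qed.

Lemma intR_mulQ (z : int) (n : nat) : intR (z * n%:Z) = Rmult (intR z) (INR n).
Proof.
case: z => m.
  by rewrite -PoszM /= -multE mult_INR.
rewrite NegzE mulNr -PoszM.
have -> : Rmult (intR (Negz m)) (INR n) = Ropp (INR (m.+1 * n)%N) by rewrite -multE mult_INR /=; ring.
by case: (m.+1 * n)%N => [|q] /=; [rewrite Ropp_0 | ].
Qed.

Lemma card_mono_gt0 r D : (0 < #|{: mono r D}|)%N.
Proof.
apply/card_gt0P.
have H : (\sum_(i < r.+1) (if i == ord0 then D else 0%N))%N = D.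
  by rewrite (bigD1 ord0) //= big1 ?addn0 // => i /negbTE ->.
by exists (mk_mono H).
Qed.

Lemma ratio_main (k : closedFieldType) r d D (nrm : (k -> 'M[k]_r.+1) -> R)
  (l : k -> 'M[k]_r.+1) (f : hform k r d) :
  is_ops_SL l -> f != 0 ->
  (exists y, ratio_is nrm d f l y) /\
  (forall x, ratio_is nrm (d + D) f l x <->
     exists y, ratio_is nrm d f l y /\ x = Rmult (INR #|{: mono r D}|) y).
Proof.
move=> [[[N [P hl]] _] hdet] fn0.
have hdt : (d <= d + D)%N by rewrite leq_addr.
have [[i mi] H] := mu_main hdt hl hdet fn0.
have EQ : Qdim r d (d + D) = #|{: mono r D}| by rewrite /Qdim addKn.
split; first by exists (Rdiv (intR i) (nrm l)); exists i.
move=> x; split.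
  move=> [j [mj ->]]; have [i' [mi' ->]] := (H j).1 mj.
  exists (Rdiv (intR i') (nrm l)); split; first by exists i'.
  rewrite intR_mulQ EQ /Rdiv; ring.
move=> [y [[i' [mi' ->]] ->]].
exists (i' * (Qdim r d (d + D))%:Z); split; first by apply: (H _).2; exists i'.
rewrite intR_mulQ EQ /Rdiv; ring.
Qed.

Unset Implicit Arguments.
Set Strict Implicit.

Theorem theorem1 (k : closedFieldType) (r d : nat)
    (nrm : (k -> 'M[k]_r.+1) -> R) :
  (0 < r)%N -> (0 < d)%N -> admissible_norm nrm ->
  (forall (D : nat) (a : 'I_r.+1 -> int),
     \sum_(i < r.+1) a i = 0 -> indivisible (diag_ops (k:=k) a) ->
     forall delta : R, Rlt R0 delta ->
     forall f : hform k r d, f != 0 ->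
       (stratum nrm (d + D) (diag_ops (k:=k) a) (Rmult (INR #|{: mono r D}|) delta) f
        <-> stratum nrm d (diag_ops (k:=k) a) delta f))
  /\ (forall (D : nat) (f : hform k r d), f != 0 ->
       (unstable nrm (d + D) f <-> unstable nrm d f)).
Proof.
move=> _ _ _; split.
  move=> D a _ _ delta dpos f fn0.
  set Q := INR #|{: mono r D}|.
  have Qpos : Rlt R0 Q by apply: lt_0_INR; apply/ssrnat.ltP; exact: card_mono_gt0.
  have Qn0 : Q <> R0 by apply: Rgt_not_eq.
  split.
    move=> [[l [sl [il [cl rt]]]] mx]; split.
      exists l; split => //; split => //; split => //.
      have [_ H] := ratio_main D nrm sl fn0.
      have [y [ry Ey]] := (H _).1 rt.
      by rewrite (Rmult_eq_reg_l _ _ _ Ey Qn0).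
    move=> l' x sl' il' rx.
    have [_ H] := ratio_main D nrm sl' fn0.
    apply: (Rmult_le_reg_l _ _ _ Qpos); apply: (mx l') => //.
    by apply: (H _).2; exists x.
  move=> [[l [sl [il [cl rt]]]] mx]; split.
    exists l; split => //; split => //; split => //.
    have [_ H] := ratio_main D nrm sl fn0.
    by apply: (H _).2; exists delta.
  move=> l' x sl' il' rx.
  have [_ H] := ratio_main D nrm sl' fn0.
  have [y [ry ->]] := (H _).1 rx.
  by apply: Rmult_le_compat_l; [apply: Rlt_le | apply: (mx l')].
move=> D f fn0.
set Q := INR #|{: mono r D}|.
have Qpos : Rlt R0 Q by apply: lt_0_INR; apply/ssrnat.ltP; exact: card_mono_gt0.
split.
  move=> [delta [dpos [[l [sl [il rt]]] mx]]].
  have [_ H] := ratio_main D nrm sl fn0.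
  have [y [ry Ey]] := (H _).1 rt.
  exists y; split.
    apply: (Rmult_lt_reg_l _ _ _ Qpos); rewrite Rmult_0_r -Ey; exact: dpos.
  split; first by exists l.
  move=> l' x sl' il' rx.
  have [_ H'] := ratio_main D nrm sl' fn0.
  apply: (Rmult_le_reg_l _ _ _ Qpos); rewrite -Ey; apply: (mx l') => //.
  by apply: (H' _).2; exists x.
move=> [delta [dpos [[l [sl [il rt]]] mx]]].
exists (Rmult Q delta); split; first exact: Rmult_lt_0_compat.
split.
  exists l; split => //; split => //.
  have [_ H] := ratio_main D nrm sl fn0.
  by apply: (H _).2; exists delta.
move=> l' x sl' il' rx.
have [_ H] := ratio_main D nrm sl' fn0.
have [y [ry ->]] := (H _).1 rx.
by apply: Rmult_le_compat_l; [apply: Rlt_le | apply: (mx l')].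
Qed.
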